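(* Let $r\ge3$ be an integer and let $G$ be an $(r+1)$-path degenerate graph with maximum degree $\Delta\ge3$. If $G$ is a forest, then $a'_r(G)=\Delta$; otherwise $a'_r(G)=\max\{\Delta,r\}$.
   Context: Graphs are finite and simple. For an integer $r\ge3$, the generalized $r$-acyclic chromatic index $a'_r(G)$ is the minimum number of colors in a proper edge coloring of $G$ (adjacent edges get distinct colors) such that every cycle $C$ of $G$ receives at least $\min\{|C|,r\}$ distinct colors. A strict ear of a graph $G$ is a path of $G$ whose internal vertices all have degree $2$ in $G$ and whose two endpoints are distinct. For an integer $p\ge1$, a $p$-reduction of $G$ is the deletion of either an isolated vertex, or a vertex of degree $1$, or the internal vertices of a strict ear of $G$ of length at least $p$. A graph is $p$-path degenerate if it can be reduced to the empty graph by a sequence of $p$-reductions. *)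

(* Defs.v *)
From mathcomp Require Import all_boot.
Set Implicit Arguments. Unset Strict Implicit. Unset Printing Implicit Defensive.

(* A finite simple graph is given by a vertex finType T and an adjacency
   relation e : rel T, assumed symmetric and irreflexive. *)

Section Graph.
Variables (T : finType) (e : rel T).

Definition deg_in (S : {set T}) (v : T) : nat := #|[set u in S | e v u]|.

Definition max_deg : nat := \max_(v : T) #|[set u | e v u]|.

Definition is_graph_cycle (s : seq T) : Prop :=
  [/\ 3 <= size s, uniq s & cycle e s].

Definition is_forest : Prop := forall s, ~ is_graph_cycle s.

Definition cycle_colors (col : T -> T -> nat) (s : seq T) : nat :=
  size (undup [seq col x (next s x) | x <- s]).

Definition r_acyclic_coloring (r k : nat) (col : T -> T -> nat) : Prop :=
  [/\ (forall x y, e x y -> col x y = col y x),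
      (forall x y, e x y -> col x y < k),
      (forall x y z, e x y -> e x z -> y != z -> col x y != col x z) &
      (forall s, is_graph_cycle s -> minn (size s) r <= cycle_colors col s)].

Definition r_acyclic_colorable (r k : nat) : Prop :=
  exists col, r_acyclic_coloring r k col.

Definition gen_acyclic_index (r k : nat) : Prop :=
  r_acyclic_colorable r k /\ (forall k', r_acyclic_colorable r k' -> k <= k').

Definition p_reduction (p : nat) (S S' : {set T}) : Prop :=
  (exists v, v \in S /\ deg_in S v = 0 /\ S' = S :\ v)
  \/ (exists v, v \in S /\ deg_in S v = 1 /\ S' = S :\ v)
  \/ (exists (x y : T) (s : seq T),
        all (fun z => z \in S) (x :: rcons s y) /\
        uniq (x :: rcons s y) /\
        path e x (rcons s y) /\
        x != y /\
        all (fun z => deg_in S z == 2) s /\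
        p <= (size s).+1 /\
        S' = S :\: [set z in s]).

Inductive p_degenerate (p : nat) : {set T} -> Prop :=
  | pdeg_empty : p_degenerate p set0
  | pdeg_step S S' : p_reduction p S S' -> p_degenerate p S' -> p_degenerate p S.

Definition path_degenerate (p : nat) : Prop := p_degenerate p [set: T].

End Graph.

(* Main.v *)
Require Import Defs.
From mathcomp Require Import all_boot.
From mathcomp Require Import zify.
From Stdlib Require Import Classical.
Set Implicit Arguments. Unset Strict Implicit. Unset Printing Implicit Defensive.


Definition sw (i j q : nat) := if q == i then j else if q == j then i else q.

Lemma swK i j : involutive (sw i j).
Proof.
move=> q; rewrite /sw.
case: (eqVneq q i) => [->|qi]; first by rewrite eqxx; case: eqP.
case: (eqVneq q j) => [->|qj]; first by rewrite eqxx.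
by rewrite (negbTE qi) (negbTE qj).
Qed.

Lemma sw_lt K i j q : i < K -> j < K -> q < K -> sw i j q < K.
Proof. by rewrite /sw; case: (q == i); case: (q == j). Qed.

Lemma ear_colors_gen K R m a b (h Q : nat -> nat) : injective h ->
  (forall q, q < K -> h q < K) -> R <= K -> (forall j, Q j < R) ->
  h (Q 0) = a -> h (Q m) = b -> (forall j, j < m -> Q j != Q j.+1) ->
  (forall q, q < R -> exists2 j, j <= m & Q j = q) ->
  exists c : nat -> nat, [/\ c 0 = a, c m = b, (forall j, j < m -> c j != c j.+1),
    (forall j, c j < K) &
    (forall L : seq nat, (forall j, j <= m -> c j \in L) -> R <= size (undup L))].
Proof.
move=> hinj hK RK QR h0 hm Qp Qc; exists (fun j => h (Q j)); split => //.
- by move=> j jm; rewrite (inj_eq hinj) Qp.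
- by move=> j; apply: hK; apply: leq_trans (QR j) RK.
move=> L HL.
have -> : R = size (map h (iota 0 R)) by rewrite size_map size_iota.
apply: uniq_leq_size; first by rewrite (map_inj_uniq hinj) iota_uniq.
move=> t /mapP[q]; rewrite mem_iota add0n => /andP[_ qR] ->.
have [j jm <-] := Qc q qR.
by rewrite mem_undup HL.
Qed.

Lemma odd_flip m j : j < m -> odd (m - j) = ~~ odd (m - j.+1).
Proof. by move=> jm; rewrite -(subnSK jm) /=; case: odd. Qed.

Lemma ear_colors K R m a b : 3 <= R -> R <= K -> R <= m -> a < K -> b < K ->
  exists c : nat -> nat, [/\ c 0 = a, c m = b, (forall j, j < m -> c j != c j.+1),
    (forall j, c j < K) &
    (forall L : seq nat, (forall j, j <= m -> c j \in L) -> R <= size (undup L))].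
Proof.
move=> R3 RK Rm aK bK.
have K0 : 0 < K by lia.
have K1 : 1 < K by lia.
case: (eqVneq a b) => [<-|ab].
  pose Q j := if j <= R.-1 then j else (if odd (m - j) then 1 else 0).
  apply: (@ear_colors_gen K R m a a (sw 0 a) Q).
  - exact: can_inj (swK 0 a).
  - by move=> q qK; apply: sw_lt.
  - done.
  - by move=> j; rewrite /Q; case: ifP => [|_]; [lia|case: odd; lia].
  - by rewrite /Q leq0n /sw eqxx.
  - have -> : Q m = 0 by rewrite /Q subnn /=; case: ifP => //; lia.
    by rewrite /sw eqxx.
  - move=> j jm; rewrite /Q (odd_flip jm).
    case: (odd (m - j.+1)); repeat case: ifP => ?; lia.
  - move=> q qR; exists q; first lia.
    by rewrite /Q; case: ifP => //; lia.
pose b' := sw 0 a b.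
have b'0 : b' != 0.
  by apply/negP=> /eqP b0; move: (swK 0 a b); rewrite -/b' b0 /sw eqxx => E; rewrite E eqxx in ab.
pose Q j := if j == 0 then 0 else if j <= R.-2 then j.+1 else (if odd (m - j) then 0 else 1).
apply: (@ear_colors_gen K R m a b (fun q => sw 0 a (sw 1 b' q)) Q).
- by apply: inj_comp; apply: can_inj; apply: swK.
- by move=> q qK; apply: sw_lt => //; apply: sw_lt => //; rewrite /b'; apply: sw_lt.
- done.
- by move=> j; rewrite /Q; case: ifP => [|_]; [lia|case: ifP => [|_]; [lia|case: odd; lia]].
  have b0' : (0 == b') = false by rewrite eq_sym; apply: negbTE.
  rewrite /Q eqxx /sw /= b0' eqxx.
  by [].
- have -> : Q m = 1.
    by rewrite /Q subnn /=; case: ifP => [|_]; [lia|case: ifP => //; lia].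
  by change (sw 0 a (sw 0 a b) = b); rewrite swK.
- move=> j jm; rewrite /Q (odd_flip jm).
  case: (odd (m - j.+1)); repeat case: ifP => ?; lia.
- move=> q qR.
  case: (eqVneq q 0) => [->|q0]; first by exists 0.
  case: (eqVneq q 1) => [->|q1].
    exists m => //; rewrite /Q subnn /=; case: ifP => [|_]; [lia|case: ifP => //; lia].
  exists q.-1; first lia.
  rewrite /Q; case: ifP => [|_]; [lia|case: ifP => //; lia].
Qed.

Section Main.
Variables (T : finType) (e : rel T).
Hypothesis esym : symmetric e.
Hypothesis eirr : irreflexive e.

Lemma next_neq_prev (c : seq T) u : uniq c -> 3 <= size c -> u \in c ->
  next c u != prev c u.
Proof.
move=> uc sc uin; case: (rot_to uin) => i t Hrot.
rewrite -(next_rot i uc) -(prev_rot i uc) Hrot.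
have uc' : uniq (u :: t) by rewrite -Hrot rot_uniq.
have st : 2 <= size t by rewrite -ltnS -[(size t).+1]/(size (u :: t)) -Hrot size_rot.
case: t uc' st {Hrot} => [|v [|w t']] // uc' _.
rewrite next_nth prev_nth mem_head.
have unin : u \notin [:: v, w & t'] by case/andP: uc'.
rewrite (memNindex unin) /= eqxx /=.
apply/negP=> /eqP Hv.
have := nth_uniq u (i:=1) (j:=(size t').+2) _ _ uc'.
rewrite /= !ltnS.
move=> /(_ isT (leqnn _)).
by rewrite -Hv eqxx.
Qed.


Lemma cyc_nbrs (S : {set T}) c u : is_graph_cycle e c -> {subset c <= S} -> u \in c ->
  [/\ next c u \in [set w in S | e u w], prev c u \in [set w in S | e u w]
    & next c u != prev c u].
Proof.
case=> sc uc cc sub uin; split; last exact: next_neq_prev.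
  by rewrite inE sub ?mem_next // next_cycle.
by rewrite inE sub ?mem_prev // esym prev_cycle.
Qed.

Lemma deg_cycle (S : {set T}) c u : is_graph_cycle e c -> {subset c <= S} -> u \in c ->
  2 <= deg_in e S u.
Proof.
move=> cyc sub uin; case: (cyc_nbrs cyc sub uin) => h1 h2 h3.
rewrite /deg_in -[2]/((true).+1) -h3 -(cards2 (next c u) (prev c u)).
by apply: subset_leq_card; apply/subsetP=> z /set2P[]->.
Qed.

Lemma two_nbrs (S : {set T}) u a b w : deg_in e S u = 2 -> a \in S -> b \in S ->
  e u a -> e u b -> a != b -> w \in S -> e u w -> w = a \/ w = b.
Proof.
move=> d aS bS ua ub ab wS uw.
have sub : [set a; b] \subset [set z in S | e u z].
  by apply/subsetP=> z /set2P[]->; rewrite inE ?aS ?bS.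
have : [set a; b] == [set z in S | e u z].
  by rewrite eqEcard sub cards2 ab -d /=.
move/eqP=> E; have : w \in [set z in S | e u z] by rewrite inE wS.
by rewrite -E => /set2P.
Qed.

Lemma deg2_cycle (S : {set T}) c u w : is_graph_cycle e c -> {subset c <= S} -> u \in c ->
  deg_in e S u = 2 -> w \in S -> e u w ->
  w = next c u \/ (w \in c /\ next c w = u).
Proof.
move=> cyc sub uin d wS uw; case: (cyc_nbrs cyc sub uin).
rewrite !inE => /andP[nS nu] /andP[pS pu] np.
case: (two_nbrs d nS pS nu pu np wS uw) => ->; first by left.
right; split; first by rewrite mem_prev.
by case: cyc => _ uc _; rewrite next_prev.
Qed.


Lemma path_const (f : T -> bool) h t :
  path (fun u w => f u == f w) h t -> forall z, z \in h :: t -> f z = f h.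
Proof.
elim: t h => [|k t IH] h /=; first by move=> _ z; rewrite inE => /eqP->.
case/andP=> /eqP fhk pk z; rewrite inE => /orP[/eqP->//|zin].
by rewrite (IH k pk z zin).
Qed.

Lemma ear_all (S : {set T}) x y s c : path e x (rcons s y) ->
  all (fun z => deg_in e S z == 2) s -> {subset s <= S} ->
  is_graph_cycle e c -> {subset c <= S} ->
  (exists2 z, z \in s & z \in c) -> {subset s <= c}.
Proof.
move=> pth dg sS cyc sub [z zs zc].
case: s pth dg sS zs => [//|h t] pth dg sS zs.
move: pth; rewrite rcons_path => /andP[/= /andP[_ pht] _].
have pc : path (fun u w => (u \in c) == (w \in c)) h t.
  apply: (@sub_in_path _ [pred z | z \in h :: t] e) => //.
  move=> u w /= us ws uw.
  have du : deg_in e S u = 2 by apply/eqP; move/allP: dg; apply.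
  have dw : deg_in e S w = 2 by apply/eqP; move/allP: dg; apply.
  apply/eqP; apply/idP/idP=> [uc|wc].
    case: (deg2_cycle cyc sub uc du (sS _ ws) uw) => [->|[]//].
    by rewrite mem_next.
  rewrite esym in uw.
  case: (deg2_cycle cyc sub wc dw (sS _ us) uw) => [->|[]//].
  by rewrite mem_next.
move=> q qs; have := path_const pc qs; have := path_const pc zs.
by rewrite zc => <- ->.
Qed.

Lemma long_cycle p (S : {set T}) : p_degenerate e p S ->
  forall c, is_graph_cycle e c -> {subset c <= S} ->
  exists c', is_graph_cycle e c' /\ p <= (size c').+1.
Proof.
elim=> {S} [|S S' red _ IH] c cyc sub.
  case: cyc => sc _ _; case: c sc sub => // q c _ sub.
  by have := sub q (mem_head _ _); rewrite inE.
case: (boolP (all (fun z => z \in S') c)) => [/allP sub'|/allPn[z zc zS']].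
  exact: IH cyc sub'.
have zS := sub z zc.
case: red => [[v [vS [d ES]]]|[[v [vS [d ES]]]|[x [y [s [HallS [Hu [Hp [Hxy [Hdeg [Hps ES]]]]]]]]]]].
- have zv : z = v by move: zS'; rewrite ES in_setD1 zS andbT negbK => /eqP.
  by have := deg_cycle cyc sub zc; rewrite zv d.
- have zv : z = v by move: zS'; rewrite ES in_setD1 zS andbT negbK => /eqP.
  by have := deg_cycle cyc sub zc; rewrite zv d.
have zs : z \in s by move: zS'; rewrite ES in_setD zS andbT negbK inE.
have sS : {subset s <= S}.
  by move=> q qs; apply: (allP HallS q); rewrite inE mem_rcons inE qs !orbT.
have sc := ear_all Hp Hdeg sS cyc sub (ex_intro2 _ _ z zs zc).
exists c; split => //; apply: (leq_trans Hps); rewrite ltnS.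
apply: uniq_leq_size sc.
by move: Hu; rewrite /= rcons_uniq => /andP[_ /andP[]].
Qed.


Definition good K R (S : {set T}) (col : T -> T -> nat) : Prop :=
 [/\ (forall x y, x \in S -> y \in S -> e x y -> col x y = col y x),
     (forall x y, x \in S -> y \in S -> e x y -> col x y < K),
     (forall x y z, x \in S -> y \in S -> z \in S -> e x y -> e x z -> y != z ->
        col x y != col x z) &
     (forall c, is_graph_cycle e c -> {subset c <= S} ->
        minn (size c) R <= cycle_colors col c)].

Lemma avail (L : seq nat) K : size L < K -> exists2 a, a < K & a \notin L.
Proof.
move=> sL; case: (boolP (all (fun a => a \in L) (iota 0 K))) => [/allP H|/allPn[a]].
  have := uniq_leq_size (iota_uniq 0 K) H; rewrite size_iota => KL.
  by have := leq_trans sL KL; rewrite ltnn.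
by rewrite mem_iota add0n => /andP[_ aK] aL; exists a.
Qed.

Lemma deg_le_max (S : {set T}) v : deg_in e S v <= max_deg e.
Proof.
rewrite /max_deg; apply: (leq_trans _ (leq_bigmax v)).
by apply: subset_leq_card; apply/subsetP=> w; rewrite !inE => /andP[].
Qed.

Lemma colors_at (S : {set T}) (col : T -> T -> nat) u K : deg_in e S u < K ->
  exists2 a, a < K & forall w, w \in S -> e u w -> col u w != a.
Proof.
move=> dK.
have [a aK aL] : exists2 a, a < K & a \notin [seq col u w | w <- enum [set w in S | e u w]].
  by apply: avail; rewrite size_map -cardE.
exists a => // w wS uw; apply/eqP=> E; move: aL; rewrite -E.
by rewrite map_f // mem_enum inE wS.
Qed.

Lemma nodeg0 (S : {set T}) v w : deg_in e S v = 0 -> w \in S -> e v w -> False.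
Proof.
move=> d wS vw; have := card0_eq d w; rewrite !inE wS vw => /= H.
by [].
Qed.

Lemma good0 K R : exists col, good K R set0 col.
Proof.
exists (fun _ _ => 0); split; try by move=> ? ?; rewrite inE.
move=> c [sc _ _]; case: c sc => // q c _ sub.
by have := sub q (mem_head _ _); rewrite inE.
Qed.

Lemma good_iso K R (S : {set T}) v col : v \in S -> deg_in e S v = 0 ->
  good K R (S :\ v) col -> good K R S col.
Proof.
move=> vS d [g1 g2 g3 g4].
have nv : forall x y, x \in S -> y \in S -> e x y -> x \in S :\ v.
  move=> x y xS yS xy; rewrite in_setD1 xS andbT.
  by apply/eqP=> xv; subst x; apply: (nodeg0 d yS xy).
have nv2 : forall x y, x \in S -> y \in S -> e x y -> y \in S :\ v.
  by move=> x y xS yS xy; apply: (nv y x) => //; rewrite esym.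
split.
- by move=> x y xS yS xy; apply: g1 => //; [exact: nv xy|exact: nv2 xy].
- by move=> x y xS yS xy; apply: g2 => //; [exact: nv xy|exact: nv2 xy].
- move=> x y z xS yS zS xy xz; apply: g3 => //;
    [exact: nv xy|exact: nv2 xy|exact: nv2 xz].
move=> c cyc sub; apply: g4 => // q qc.
rewrite in_setD1 sub // andbT; apply/eqP=> qv; subst q.
by have := deg_cycle cyc sub qc; rewrite d.
Qed.

Lemma good_pend K R (S : {set T}) v col : v \in S -> deg_in e S v = 1 ->
  max_deg e <= K -> good K R (S :\ v) col -> exists col', good K R S col'.
Proof.
move=> vS d DK [g1 g2 g3 g4].
have [u Nu] : exists u, [set w in S | e v w] = [set u].
  by apply/cards1P; rewrite -/(deg_in e S v) d.
have : u \in [set w in S | e v w] by rewrite Nu set11.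
rewrite inE => /andP[uS vu].
have uniqn : forall w, w \in S -> e v w -> w = u.
  by move=> w wS vw; apply/set1P; rewrite -Nu inE wS vw.
have uv : u != v by apply/eqP=> E; rewrite E eirr in vu.
have dlt : deg_in e (S :\ v) u < K.
  apply: (leq_trans _ (leq_trans (deg_le_max S u) DK)).
  rewrite /deg_in.
  have -> : [set w in S :\ v | e u w] = [set w in S | e u w] :\ v.
    by apply/setP=> w; rewrite !inE andbA.
  by rewrite [X in _ < X](cardsD1 v [set w in S | e u w]) inE vS esym vu.
have [a aK aL] := colors_at col dlt.
pose col' x y := if (x == v) || (y == v) then a else col x y.
have inS' : forall x, x \in S -> x != v -> x \in S :\ v.
  by move=> x xS xv; rewrite in_setD1 xS xv.
exists col'; split.
- move=> x y xS yS xy; rewrite /col' orbC.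
  case: ifP => // /norP[xv yv]; apply: g1 => //; exact: inS'.
- move=> x y xS yS xy; rewrite /col'.
  case: ifP => // /norP[xv yv]; apply: g2 => //; exact: inS'.
- move=> x y z xS yS zS xy xz yz; rewrite /col'.
  case: (eqVneq x v) => [xv|xv].
    subst x; by rewrite (uniqn y yS xy) (uniqn z zS xz) eqxx in yz.
  case: (eqVneq y v) => [yv|yv]; case: (eqVneq z v) => [zv|zv] /=.
  + by rewrite yv zv eqxx in yz.
  + have xu : x = u by apply: uniqn => //; rewrite esym -yv.
    subst x; rewrite eq_sym; apply: aL => //; exact: inS'.
  + have xu : x = u by apply: uniqn => //; rewrite esym -zv.
    subst x; apply: aL => //; exact: inS'.
  + by apply: g3 => //; exact: inS'.
move=> c cyc sub.
have vc : v \notin c.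
  by apply/negP=> vc; have := deg_cycle cyc sub vc; rewrite d.
have sub' : {subset c <= S :\ v}.
  by move=> q qc; apply: inS'; [exact: sub|apply/eqP=> E; rewrite -E qc in vc].
have -> : cycle_colors col' c = cycle_colors col c.
  rewrite /cycle_colors; congr (size (undup _)); apply/eq_in_map => q qc.
  rewrite /col'.
  have qv : q != v by apply/eqP=> E; rewrite -E qc in vc.
  have nv : next c q != v by apply/eqP=> E; rewrite -E mem_next qc in vc.
  by rewrite (negbTE qv) (negbTE nv).
exact: g4.
Qed.

End Main.





Lemma arith0 i m : 0 < i -> i <= m -> i.-1 < m.
Proof. lia. Qed.
Lemma arith1 i : 0 < i -> minn i i.-1 = i.-1 /\ minn i i.+1 = i.
Proof. lia. Qed.
Lemma arith2 m iu iz : 0 < iu <= m -> (iz = iu.-1 \/ iz = iu.+1) -> ~~ (0 < iz <= m) ->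
  iz < m.+2 -> (iz = 0 /\ minn iz iu = 0) \/ (iz = m.+1 /\ minn iz iu = m).
Proof. move=> /andP[h1 h2] h3 /negP h4 h5; lia. Qed.
Lemma arith3 m iu iw iz : 0 < iu <= m -> 0 < iw <= m -> (iz = iu.-1 \/ iz = iu.+1) ->
  (iz = iw.-1 \/ iz = iw.+1) -> ~~ (0 < iz <= m) -> iu = iw.
Proof. move=> /andP[h1 h2] /andP[h1' h2'] h3 h3' /negP h4; lia. Qed.

Section Ear.
Variables (T : finType) (e : rel T).
Hypothesis esym : symmetric e.
Hypothesis eirr : irreflexive e.

Lemma good_ear K R (S : {set T}) x y s col :
  all (fun z => z \in S) (x :: rcons s y) -> uniq (x :: rcons s y) ->
  path e x (rcons s y) -> all (fun z => deg_in e S z == 2) s ->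
  3 <= R -> R <= K -> R <= size s -> max_deg e <= K ->
  good e K R (S :\: [set z in s]) col -> exists col', good e K R S col'.
Proof.
move=> HallS Hu Hp Hdeg R3 RK Rm DK [g1 g2 g3 g4].
set P := x :: rcons s y; set m := size s; set S' := S :\: [set z in s] in g1 g2 g3 g4 *.
have sP : size P = m.+2 by rewrite /= size_rcons.
have m0 : 0 < m by lia.
have xnP : x \notin rcons s y by case/andP: Hu.
have urs : uniq (rcons s y) by case/andP: Hu.
have yns : y \notin s by move: urs; rewrite rcons_uniq => /andP[].
have F1 : forall j, j < m.+2 -> index (nth x P j) P = j.
  by move=> j jm; apply: index_uniq; rewrite ?sP.
have F2 : forall z, z \in P -> nth x P (index z P) = z by move=> z; apply: nth_index.
have idxlt : forall z, z \in P -> index z P < m.+2 by move=> z zP; rewrite -sP index_mem.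
have F3 : forall z, (z \in s) = (z \in P) && (0 < index z P <= m).
  move=> z; case: (boolP (z \in s)) => zs.
    have zx : (x == z) = false.
      by apply/negP=> /eqP E; move: xnP; rewrite E mem_rcons inE zs orbT.
    rewrite /P inE mem_rcons inE zs !orbT /= zx -cats1 index_cat zs /=.
    by rewrite -/m index_mem.
  symmetry; apply/negP=> /andP[zP /andP[i0 im]].
  move: zP i0 im; rewrite /P inE => /orP[/eqP->|]; first by rewrite /= eqxx.
  rewrite mem_rcons inE (negbTE zs) orbF => /eqP ->.
  have yx : (x == y) = false.
    by apply/negP=> /eqP E; move: xnP; rewrite E mem_rcons mem_head.
  by rewrite /= yx -cats1 index_cat (negbTE yns) /= eqxx addn0 ltnn.
have F5 : forall j, j < m.+2 -> nth x P j \in S.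
  by move=> j jm; apply: (allP HallS); apply: mem_nth; rewrite sP.
have F4 : forall j, j <= m -> e (nth x P j) (nth x P j.+1).
  move=> j jm; move/(pathP x): Hp => /(_ j); rewrite size_rcons ltnS => /(_ jm).
  done.
have inS' : forall z, (z \in S') = (z \in S) && (z \notin s).
  by move=> z; rewrite /S' in_setD inE andbC.
clearbody S'.
have Pnth0 : nth x P 0 = x by [].
have Pnthm : nth x P m.+1 = y by rewrite /= nth_rcons ltnn eqxx.
have F6 : forall z w, z \in s -> w \in S -> e z w ->
    w \in P /\ (index w P = (index z P).-1 \/ index w P = (index z P).+1).
  move=> z w zs wS zw; move: (zs); rewrite F3 => /andP[zP /andP[i0 im]].
  set i := index z P in i0 im *.
  have l1 : i.-1 <= m by lia.
  have l2 : i.-1 < m.+2 by lia.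
  have l3 : i.+1 < m.+2 by lia.
  have ez1 : e z (nth x P i.-1).
    by rewrite esym; have := F4 i.-1 l1; rewrite prednK // /i F2.
  have ez2 : e z (nth x P i.+1) by have := F4 i im; rewrite /i F2.
  have dz : deg_in e S z = 2 by apply/eqP; apply: (allP Hdeg).
  have ab : nth x P i.-1 != nth x P i.+1.
    apply/negP=> /eqP E; have := F1 i.-1 l2; rewrite E F1 // => H.
    have : i.-1 < i.+1 by rewrite ltnS leq_pred.
    by rewrite -H ltnn.
  have [->|->] := two_nbrs dz (F5 _ l2) (F5 _ l3) ez1 ez2 ab wS zw.
    by split; [apply: mem_nth; rewrite sP|left; apply: F1].
  by split; [apply: mem_nth; rewrite sP|right; apply: F1].
have sS : {subset s <= S}.
  by move=> q qs; apply: (allP HallS); rewrite inE mem_rcons inE qs !orbT.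
have xS : x \in S by apply: (allP HallS); rewrite mem_head.
have yS : y \in S by apply: (allP HallS); rewrite inE mem_rcons mem_head orbT.
have dropx : forall z u, z \in S -> u \in s -> e z u -> deg_in e S' z < K.
  move=> z u zS us zu.
  apply: (leq_trans _ (leq_trans (deg_le_max e S z) DK)).
  rewrite /deg_in; apply: proper_card; apply/properP; split.
    by apply/subsetP=> w; rewrite !inE inS' => /andP[/andP[-> _] ->].
  by exists u; rewrite !inE ?inS' ?sS ?us ?zu ?andbF.
have s1 : nth x P 1 \in s by rewrite F3 mem_nth ?sP // F1.
have sm : nth x P m \in s by rewrite F3 mem_nth ?sP // F1 // m0 leqnn.
have ex1 : e x (nth x P 1) by apply: (F4 0).
have eym : e y (nth x P m) by rewrite esym -Pnthm; apply: F4.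
have [a0 a0K a0L] := colors_at col (dropx x _ xS s1 ex1).
have [b0 b0K b0L] := colors_at col (dropx y _ yS sm eym).
have [c [c0 cm cp cK cL]] := ear_colors R3 RK Rm a0K b0K.
pose col' u w := if (u \in S') && (w \in S') then col u w
                 else c (minn (index u P) (index w P)).
have col'_s : forall u w, u \in s -> col' u w = c (minn (index u P) (index w P)).
  by move=> u w us; rewrite /col' inS' us andbF.
have col'_sym : forall u w, u \in s -> col' u w = col' w u.
  move=> u w us; have uS' : (u \in S') = false by rewrite inS' us andbF.
  by rewrite /col' uS' andbF /= minnC.
exists col'; split.
- move=> u w uS wS uw; rewrite /col' andbC minnC.
  by case: ifP => [/andP[wS' uS']|//]; apply: g1.
- move=> u w uS wS uw; rewrite /col'.
  by case: ifP => [/andP[uS' wS']|_]; [apply: g2|apply: cK].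
- move=> z u w zS uS wS zu zw uw.
  case: (boolP (z \in s)) => zs.
    have [uP hu] := F6 z u zs uS zu.
    have [wP hw] := F6 z w zs wS zw.
    rewrite !col'_s //.
    move: (zs); rewrite F3 => /andP[_ /andP[iz0 izm]].
    have ne : index u P != index w P.
      by apply/negP=> /eqP E; move: uw; rewrite -(F2 u uP) E F2 ?eqxx.
    have [A1 A2] := arith1 iz0.
    have cpz : c (index z P).-1 != c (index z P).
      by have := cp _ (arith0 iz0 izm); rewrite prednK.
    move: ne; case: hu => ->; case: hw => ->; rewrite ?eqxx // A1 A2 => _ //.
    by rewrite eq_sym.
  have zS' : z \in S' by rewrite inS' zS zs.
  have end_claim : forall u w, u \in s -> w \in S -> w \notin s -> e z u -> e z w ->
      col' z u != col' z w.
    move=> u' w' us wS' ws zu' zw'.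
    have wS'' : w' \in S' by rewrite inS' wS' ws.
    have -> : col' z w' = col z w' by rewrite /col' zS' wS''.
    rewrite -(col'_sym u' z us) col'_s // minnC.
    have uz : e u' z by rewrite esym.
    have [zP hz] := F6 u' z us zS uz.
    move: (us); rewrite F3 => /andP[_ iu].
    have nz : ~~ (0 < index z P <= m) by move: zs; rewrite F3 zP.
    case: (arith2 iu hz nz (idxlt z zP)) => [[iz0 ->]|[izm ->]].
      have zx : z = x by rewrite -(F2 z zP) iz0.
      by subst z; rewrite c0 eq_sym; apply: a0L.
    have zy : z = y by rewrite -(F2 z zP) izm Pnthm.
    by subst z; rewrite cm eq_sym; apply: b0L.
  case: (boolP (u \in s)) => us; case: (boolP (w \in s)) => ws.
  + have uz : e u z by rewrite esym.
    have wz : e w z by rewrite esym.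
    have [zP hz] := F6 u z us zS uz.
    have [_ hz'] := F6 w z ws zS wz.
    move: (us) (ws); rewrite !F3 => /andP[uP iu] /andP[wP iw].
    have nz : ~~ (0 < index z P <= m) by move: zs; rewrite F3 zP.
    have E := arith3 iu iw hz hz' nz.
    by move: uw; rewrite -(F2 u uP) E F2 ?eqxx.
  + exact: end_claim.
  + by rewrite eq_sym; apply: end_claim.
  have uS' : u \in S' by rewrite inS' uS us.
  have wS' : w \in S' by rewrite inS' wS ws.
  by rewrite /col' zS' uS' wS' /=; apply: g3.
- move=> c' cyc sub.
  case: (boolP (all (fun q => q \in S') c')) => [/allP sub'|/allPn[q qc qS']].
    have -> : cycle_colors col' c' = cycle_colors col c'.
      rewrite /cycle_colors; congr (size (undup _)); apply/eq_in_map => t tc.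
      by rewrite /col' sub' // sub' ?mem_next.
    exact: g4.
  have qs : q \in s by move: qS'; rewrite inS' sub //= negbK.
  have sc := ear_all esym Hp Hdeg sS cyc sub (ex_intro2 _ _ q qs qc).
  apply: leq_trans (geq_minr _ _) _.
  rewrite /cycle_colors; apply: cL => j jm.
  have inL : forall u w, u \in s -> w \in S -> e u w ->
      col' u w \in [seq col' t (next c' t) | t <- c'].
    move=> u w us wS uw.
    have dz : deg_in e S u = 2 by apply/eqP; apply: (allP Hdeg).
    case: (deg2_cycle esym cyc sub (sc u us) dz wS uw) => [->|[wc nw]].
      by apply: map_f; apply: sc.
    by rewrite col'_sym // -{1}nw; apply: map_f.
  case: (posnP j) => [j0|jpos].
    subst j.
    have := inL (nth x P 1) (nth x P 0) s1 (F5 0 isT).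
    by rewrite esym col'_s // !F1 //; apply; apply: F4.
  have jl : j < m.+2 := leq_trans jm (leqnSn m).
  have jl' : j.+1 < m.+2 := jm.
  have sj : nth x P j \in s by rewrite F3 mem_nth ?sP // F1 // jpos jm.
  have := inL (nth x P j) (nth x P j.+1) sj (F5 j.+1 jl') (F4 j jm).
  by rewrite col'_s // !F1 // (minn_idPl (leqnSn j)); apply.
Qed.

End Ear.


Section Fin.
Variables (T : finType) (e : rel T).
Hypothesis esym : symmetric e.
Hypothesis eirr : irreflexive e.

Lemma good_ind p K R (S : {set T}) : 3 <= R -> R <= K -> R < p -> max_deg e <= K ->
  p_degenerate e p S -> exists col, good e K R S col.
Proof.
move=> R3 RK Rp DK; elim=> {S} [|S S' red _ [col IH]]; first exact: good0.
case: red => [[v [vS [d ES]]]|[[v [vS [d ES]]]|[x [y [s [HallS [Hu [Hp [Hxy [Hdeg [Hps ES]]]]]]]]]]].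
- by exists col; subst S'; apply: (good_iso esym vS d).
- by subst S'; apply: (good_pend esym eirr vS d DK IH).
subst S'; apply: (good_ear esym HallS Hu Hp Hdeg R3 RK _ DK IH).
by rewrite -ltnS (leq_trans Rp Hps).
Qed.

Lemma lower_delta r k col : r_acyclic_coloring e r k col -> max_deg e <= k.
Proof.
case=> _ hK hp _; apply/bigmax_leqP => v _.
rewrite cardE -(size_map (col v)) -[k](size_iota 0).
apply: uniq_leq_size.
  rewrite map_inj_in_uniq ?enum_uniq // => u w; rewrite !mem_enum !inE => vu vw E.
  by apply/eqP; apply/negPn/negP => uw; move: (hp v u w vu vw uw); rewrite E eqxx.
move=> t /mapP[u]; rewrite mem_enum inE => vu ->.
by rewrite mem_iota add0n hK.
Qed.

Lemma lower_r r k col c : r_acyclic_coloring e r k col -> is_graph_cycle e c ->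
  r <= size c -> r <= k.
Proof.
case=> _ hK _ hc cyc rc.
have := hc c cyc; rewrite (minn_idPr rc) /cycle_colors => H.
apply: leq_trans H _.
rewrite -[k](size_iota 0); apply: uniq_leq_size; first exact: undup_uniq.
move=> t; rewrite mem_undup => /mapP[u uc ->].
by case: cyc => _ _ cc; rewrite mem_iota add0n hK // next_cycle.
Qed.

End Fin.

Theorem mainTheorem14 (T : finType) (e : rel T) (r : nat) :
  symmetric e -> irreflexive e -> 3 <= r ->
  path_degenerate e r.+1 -> 3 <= max_deg e ->
  (is_forest e -> gen_acyclic_index e r (max_deg e)) /\
  (~ is_forest e -> gen_acyclic_index e r (maxn (max_deg e) r)).
Proof.
move=> esym eirr r3 Hpd D3; split.
- move=> forest; split; last by move=> k [col Hc]; apply: lower_delta Hc.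
  have R3 : 3 <= minn r (max_deg e) by rewrite leq_min r3 D3.
  have [col [g1 g2 g3 g4]] := good_ind esym eirr R3 (geq_minr _ _)
    (leq_ltn_trans (geq_minl _ _) (ltnSn r)) (leqnn _) Hpd.
  exists col; split.
  + by move=> x y; apply: g1; rewrite inE.
  + by move=> x y; apply: g2; rewrite inE.
  + by move=> x y z; apply: g3; rewrite inE.
  + by move=> c cyc; exfalso; apply: (forest c cyc).
move=> nf; split.
  have [col [g1 g2 g3 g4]] := good_ind esym eirr r3 (leq_maxr _ _) (ltnSn r)
    (leq_maxl _ _) Hpd.
  exists col; split.
  + by move=> x y; apply: g1; rewrite inE.
  + by move=> x y; apply: g2; rewrite inE.
  + by move=> x y z; apply: g3; rewrite inE.
  + by move=> c cyc; apply: g4 => // q; rewrite inE.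
move=> k [col Hc]; rewrite geq_max (lower_delta Hc) /=.
have [c cyc] : exists c, is_graph_cycle e c.
  by apply: not_all_not_ex => H; apply: nf => c; apply: H.
have [c' [cyc' sc']] := long_cycle esym Hpd cyc (fun q _ => in_setT q).
exact: lower_r Hc cyc' sc'.
Qed.
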